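(* Let $(P_n)_{n\ge 0}$ be the Padovan sequence and for $1\le b\le 3$ and $m\ge 0$ let $r_m^{(3,b)}=\sum_{k=0}^{m}P_{3k+b}$. Then for every $b\in\{1,2,3\}$ and every $m\ge 3$, $$r_m^{(3,b)}=3r_{m-1}^{(3,b)}-2r_{m-2}^{(3,b)}+r_{m-3}^{(3,b)}+1.$$
   Context: The Padovan sequence is defined by $P_0=P_1=P_2=1$ and $P_{n+3}=P_{n+1}+P_n$. *)

(* Defs.v *)
From Stdlib Require Import Arith ZArith List.

(* Padovan sequence: P_0 = P_1 = P_2 = 1, P_{n+3} = P_{n+1} + P_n. *)
Fixpoint padovan (n : nat) : nat :=
  match n with
  | 0 => 1
  | 1 => 1
  | 2 => 1
  | S (S (S k) as n2) =>
      match n2 with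
      | S k1 => padovan k1 + padovan k
      | 0 => 0
      end
  end.

Fixpoint r3 (b m : nat) : nat :=
  match m with
  | 0 => padovan b
  | S m' => r3 b m' + padovan (3 * m + b)
  end.

Lemma padovan_rec n : padovan (S (S (S n))) = padovan (S n) + padovan n.
Proof. reflexivity. Qed.

Example padovan_check :
  map padovan (seq 0 11) = 1 :: 1 :: 1 :: 2 :: 2 :: 3 :: 4 :: 5 :: 7 :: 9 :: 12 :: nil.
Proof. reflexivity. Qed.

(* Main.v *)
Require Import Defs.
From Stdlib Require Import Arith ZArith Lia.

Lemma prec x : padovan (x + 3) = padovan (x + 1) + padovan x.
Proof. replace (x+3) with (S (S (S x))) by lia. rewrite padovan_rec. f_equal; f_equal; lia. Qed.

Lemma P12 x : padovan (x + 12) + 2 * padovan (x + 6) = 3 * padovan (x + 9) + padovan (x + 3).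
Proof.
  assert (H3 := prec x).
  assert (H4 := prec (x+1)). assert (H5 := prec (x+2)). assert (H6 := prec (x+3)).
  assert (H7 := prec (x+4)). assert (H8 := prec (x+5)). assert (H9 := prec (x+6)).
  assert (H10 := prec (x+7)). assert (H11 := prec (x+8)). assert (H12 := prec (x+9)).
  replace (x+1+3) with (x+4) in * by lia. replace (x+2+3) with (x+5) in * by lia.
  replace (x+3+3) with (x+6) in * by lia. replace (x+4+3) with (x+7) in * by lia.
  replace (x+5+3) with (x+8) in * by lia. replace (x+6+3) with (x+9) in * by lia.
  replace (x+7+3) with (x+10) in * by lia. replace (x+8+3) with (x+11) in * by lia.
  replace (x+9+3) with (x+12) in * by lia.
  replace (x+1+1) with (x+2) in * by lia. replace (x+2+1) with (x+3) in * by lia.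
  replace (x+3+1) with (x+4) in * by lia. replace (x+4+1) with (x+5) in * by lia.
  replace (x+5+1) with (x+6) in * by lia. replace (x+6+1) with (x+7) in * by lia.
  replace (x+7+1) with (x+8) in * by lia. replace (x+8+1) with (x+9) in * by lia.
  replace (x+9+1) with (x+10) in * by lia.
  lia.
Qed.

Lemma key b n : 1 <= b <= 3 ->
  padovan (3 * (n + 3) + b) = 2 * padovan (3 * (n + 2) + b) + r3 b n + 1.
Proof.
  intros Hb. induction n.
  - destruct b as [|[|[|[|]]]]; try lia; reflexivity.
  - change (r3 b (S n)) with (r3 b n + padovan (3 * S n + b)).
    pose proof (P12 (3 * n + b)) as H.
    replace (3 * n + b + 12) with (3 * (S n + 3) + b) in H by lia.
    replace (3 * n + b + 9) with (3 * (n + 3) + b) in H by lia.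
    replace (3 * n + b + 6) with (3 * (n + 2) + b) in H by lia.
    replace (3 * n + b + 3) with (3 * S n + b) in H by lia.
    replace (3 * (S n + 2) + b) with (3 * (n + 3) + b) by lia.
    lia.
Qed.

Theorem theorem4p3 : forall b m : nat, 1 <= b <= 3 -> 3 <= m ->
  Z.of_nat (r3 b m) =
    (3 * Z.of_nat (r3 b (m - 1)) - 2 * Z.of_nat (r3 b (m - 2))
     + Z.of_nat (r3 b (m - 3)) + 1)%Z.
Proof.
  intros b m Hb Hm.
  destruct m as [|[|[|n]]]; try lia.
  replace (S (S (S n)) - 1) with (S (S n)) by lia.
  replace (S (S (S n)) - 2) with (S n) by lia.
  replace (S (S (S n)) - 3) with n by lia.
  pose proof (key b n Hb) as K.
  change (r3 b (S (S (S n)))) with (r3 b (S (S n)) + padovan (3 * S (S (S n)) + b)).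
  change (r3 b (S (S n))) with (r3 b (S n) + padovan (3 * S (S n) + b)).
  change (r3 b (S n)) with (r3 b n + padovan (3 * S n + b)).
  replace (3 * S (S (S n)) + b) with (3 * (n + 3) + b) by lia.
  replace (3 * S (S n) + b) with (3 * (n + 2) + b) by lia.
  lia.
Qed.
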